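(* Let $A>0$. For every $w\ge 0$ the initial value problem $$v'(t)=-v(t)^2\Big(\sqrt{A^2t^2+w}+v(t)\Big),\qquad v(0)=1,$$ has a unique solution $v(\cdot;w)\in C^1([0,\infty))$ defined on all of $[0,\infty)$, and it takes values in $(0,1]$. Moreover: (1) for fixed $w$, $t\mapsto v(t;w)$ is strictly decreasing on $[0,\infty)$; for fixed $t>0$, $w\mapsto v(t;w)$ is strictly decreasing on $[0,\infty)$; (2) for all $t>0$ and $w\ge0$, $$v(t;w)<\frac{2}{2+t\sqrt{A^2t^2+w}};$$ in particular $v(t;w)\to0$ as $t\to\infty$; (3) the map $w\mapsto v(\cdot;w)$ is continuous from $[0,\infty)$ into $L^\infty(0,\infty)$.
   Context: $A>0$ is a fixed constant (a dimensionless parameter of a model of a viscous jet falling under gravity onto a moving belt). *)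

(* Defs.v *)
From Stdlib Require Import Reals Lra.
From Coquelicot Require Import Coquelicot.
Open Scope R_scope.

Definition rhs (A w t x : R) : R := - x ^ 2 * (sqrt (A ^ 2 * t ^ 2 + w) + x).

Definition has_deriv_on_nonneg (v dv : R -> R) : Prop :=
  forall t, 0 <= t -> forall eps, 0 < eps -> exists delta, 0 < delta /\
    forall s, 0 <= s -> Rabs (s - t) < delta ->
      Rabs (v s - v t - dv t * (s - t)) <= eps * Rabs (s - t).

Definition cont_on_nonneg (g : R -> R) : Prop :=
  forall t, 0 <= t -> forall eps, 0 < eps -> exists delta, 0 < delta /\
    forall s, 0 <= s -> Rabs (s - t) < delta -> Rabs (g s - g t) < eps.

Definition is_solution (A w : R) (v : R -> R) : Prop :=
  v 0 = 1 /\
  exists dv : R -> R,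
    has_deriv_on_nonneg v dv /\ cont_on_nonneg dv /\
    (forall t, 0 <= t -> dv t = rhs A w t (v t)).

(* Main.v *)
Require Import Defs.
From Stdlib Require Import Reals Lra Lia.
From Coquelicot Require Import Coquelicot.
Open Scope R_scope.


Definition Fw (A w s : R) := sqrt (A ^ 2 * s ^ 2 + w).
Definition gcl (x : R) := / Rmax 1 x.

Lemma inv_le1 a : 1 <= a -> 0 < / a <= 1.
Proof.
  intros. split. apply Rinv_0_lt_compat; lra.
  apply Rmult_le_reg_l with a; [lra|]. rewrite Rinv_r; lra.
Qed.

Lemma gcl_pos x : 0 < gcl x <= 1.
Proof. unfold gcl. apply inv_le1, Rmax_l. Qed.

Lemma gcl_lip x y : Rabs (gcl x - gcl y) <= Rabs (x - y).
Proof.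
  unfold gcl. assert (h1 : 1 <= Rmax 1 x) by apply Rmax_l.
  assert (h2 : 1 <= Rmax 1 y) by apply Rmax_l.
  assert (h3 : Rabs (Rmax 1 x - Rmax 1 y) <= Rabs (x - y)).
  { unfold Rmax; destruct (Rle_dec 1 x), (Rle_dec 1 y);
    apply Rabs_le; split; try (apply Rabs_le_between;  lra);
    pose proof (Rabs_le_between (x-y)) ; unfold Rabs; destruct (Rcase_abs (x-y)); lra. }
  replace (/ Rmax 1 x - / Rmax 1 y) with ((Rmax 1 y - Rmax 1 x) / (Rmax 1 x * Rmax 1 y)) by (field; lra).
  unfold Rdiv. rewrite Rabs_mult. rewrite Rabs_inv.
  rewrite (Rabs_pos_eq (Rmax 1 x * Rmax 1 y)) by nra.
  rewrite <- Rabs_Ropp, Ropp_minus_distr.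
  assert (0 < / (Rmax 1 x * Rmax 1 y) <= 1).
  { apply inv_le1; nra. }
  pose proof (Rabs_pos (Rmax 1 x - Rmax 1 y)). nra.
Qed.


Lemma cmult (f g : R -> R) x : continuous f x -> continuous g x -> continuous (fun y => f y * g y) x.
Proof. apply (@continuous_mult R_UniformSpace R_AbsRing). Qed.
Lemma cplus (f g : R -> R) x : continuous f x -> continuous g x -> continuous (fun y => f y + g y) x.
Proof. apply (@continuous_plus R_UniformSpace R_AbsRing R_NormedModule). Qed.
Lemma cminus (f g : R -> R) x : continuous f x -> continuous g x -> continuous (fun y => f y - g y) x.
Proof. apply (@continuous_minus R_UniformSpace R_AbsRing R_NormedModule). Qed.
Lemma copp (f : R -> R) x : continuous f x -> continuous (fun y => - f y) x.
Proof. apply (@continuous_opp R_UniformSpace R_AbsRing R_NormedModule). Qed.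
Lemma cconst (c : R) x : continuous (fun _ : R => c) x.
Proof. apply continuous_const. Qed.
Lemma cid x : continuous (fun y : R => y) x.
Proof. apply continuous_id. Qed.

Lemma Rmax_formula a b : Rmax a b = (a + b + Rabs (a - b)) * / 2.
Proof. unfold Rmax, Rabs; destruct (Rle_dec a b), (Rcase_abs (a-b)); lra. Qed.

Lemma cont_Rmax c x : continuous (fun y => Rmax c y) x.
Proof.
  apply continuous_ext with (f := fun y => (c + y + Rabs (c - y)) * / 2).
  intros; now rewrite Rmax_formula.
  apply (cmult (fun y => c + y + Rabs (c - y)) (fun _ => /2)); [|apply cconst].
  apply (cplus (fun y => c + y)). apply (cplus (fun _ => c)). apply cconst. apply cid.
  apply continuous_Rabs_comp. apply (cminus (fun _ => c)). apply cconst. apply cid.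
Qed.

Lemma gcl_cont x : continuous gcl x.
Proof.
  unfold gcl. apply continuous_Rinv_comp. apply cont_Rmax.
  pose proof (Rmax_l 1 x); lra.
Qed.

Lemma Fw_cont A w x : continuous (Fw A w) x.
Proof.
  unfold Fw. apply continuous_sqrt_comp.
  apply (cplus (fun s => A ^ 2 * s ^ 2)); [|apply cconst].
  apply (cmult (fun _ => A ^ 2)); [apply cconst|].
  simpl. apply (cmult (fun s => s)). apply cid.
  apply (cmult (fun s => s)). apply cid. apply cconst.
Qed.

Lemma ex_RInt_cont (f : R -> R) a b : (forall x, continuous f x) -> ex_RInt f a b.
Proof. intros. apply (@ex_RInt_continuous R_CompleteNormedModule). intros; auto. Qed.

Lemma int_bound_pos (k : R -> R) (M t : R) : (forall x, continuous k x) -> 0 <= t ->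
  (forall s, Rabs (k s) <= M * exp (2 * Rabs s)) -> Rabs (RInt k 0 t) <= M * exp (2 * Rabs t) / 2.
Proof.
  intros hk ht hb.
  assert (hM : 0 <= M). { specialize (hb 0). pose proof (Rabs_pos (k 0)). pose proof (exp_pos (2 * Rabs 0)). nra. }
  eapply Rle_trans. apply abs_RInt_le; auto. apply ex_RInt_cont; auto.
  assert (E : is_RInt (fun s => M * exp (2 * s)) 0 t (minus (M * exp (2 * t) / 2) (M * exp (2 * 0) / 2))).
  { apply (is_RInt_derive (fun s => M * exp (2 * s) / 2)).
    - intros x _. auto_derive; auto. field.
    - intros x _. apply (cmult (fun _ => M)). apply cconst. apply continuous_exp_comp.
      apply (cmult (fun _ => 2)). apply cconst. apply cid. }
  eapply Rle_trans. apply RInt_le with (g := fun s => M * exp (2 * s)); auto.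
  apply ex_RInt_cont. intros; apply continuous_Rabs_comp; auto.
  eexists; eauto.
  intros x hx. eapply Rle_trans. apply hb. rewrite Rabs_pos_eq by lra. lra.
  rewrite (is_RInt_unique _ _ _ _ E). rewrite Rabs_pos_eq by lra.
  unfold minus, plus, opp; simpl. pose proof (exp_pos (2*0)). nra.
Qed.

Lemma int_bound (k : R -> R) (M t : R) : (forall x, continuous k x) ->
  (forall s, Rabs (k s) <= M * exp (2 * Rabs s)) -> Rabs (RInt k 0 t) <= M * exp (2 * Rabs t) / 2.
Proof.
  intros hk hb. destruct (Rle_dec 0 t) as [ht|ht].
  - now apply int_bound_pos.
  - pose proof (RInt_comp_lin k (-1) 0 0 (-t)) as E.
    replace (-1 * 0 + 0) with 0 in E by ring. replace (-1 * - t + 0) with t in E by ring.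
    rewrite <- E by (apply ex_RInt_cont; auto).
    replace (Rabs t) with (Rabs (-t)) by apply Rabs_Ropp.
    apply int_bound_pos; [|lra|].
    + intros x. apply (continuous_scal_r (-1) (fun y => k (-1 * y + 0))).
      apply continuous_comp; auto. apply (cplus (fun y => -1 * y)); [|apply cconst].
      apply (cmult (fun _ => -1)). apply cconst. apply cid.
    + intros s. unfold scal; simpl; unfold mult; simpl.
      rewrite Rabs_mult. replace (Rabs (-1)) with 1 by (rewrite Rabs_left; lra).
      replace (-1 * s + 0) with (-s) by ring. rewrite <- (Rabs_Ropp s). rewrite Rmult_1_l. apply hb.
Qed.


Lemma half_pow_pos n : 0 < (/2) ^ n.
Proof. apply pow_lt; lra. Qed.

Lemma half_pow_small e : 0 < e -> exists N, forall n, (n >= N)%nat -> (/2) ^ n < e.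
Proof.
  intros he. destruct (pow_lt_1_zero (/2)) with e as [N HN]; auto.
  rewrite Rabs_pos_eq; lra.
  exists N. intros n hn. specialize (HN n hn). rewrite Rabs_pos_eq in HN; auto.
  left; apply half_pow_pos.
Qed.

Lemma le_lim_trick x y C : (forall n, x <= y + C * (/2) ^ n) -> x <= y.
Proof.
  intros H. destruct (Rle_dec x y) as [h|h]; auto. exfalso.
  destruct (half_pow_small ((x - y) / (Rabs C + 1))) as [N HN].
  { apply Rdiv_lt_0_compat. lra. pose proof (Rabs_pos C); lra. }
  specialize (HN N (le_n _)). specialize (H N).
  pose proof (half_pow_pos N). pose proof (Rabs_pos C).
  assert (C * (/2)^N <= Rabs C * (/2)^N).
  { apply Rmult_le_compat_r. lra. apply Rle_abs. }
  assert ((Rabs C + 1) * (/ 2) ^ N < x - y).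
  { apply Rmult_lt_reg_r with (/ (Rabs C + 1)). apply Rinv_0_lt_compat; lra.
    replace ((Rabs C + 1) * (/ 2) ^ N * / (Rabs C + 1)) with ((/2)^N) by (field; lra). exact HN. }
  nra.
Qed.

Lemma prim_derive (h : R -> R) (a x : R) : (forall y, continuous h y) ->
  is_derive (fun t => RInt h a t) x (h x).
Proof.
  intros hc. apply (is_derive_RInt h (fun t => RInt h a t) a x).
  apply filter_forall. intros b. apply (@RInt_correct R_CompleteNormedModule). apply ex_RInt_cont; auto.
  auto.
Qed.

Lemma RInt_diff_bound (h : R -> R) (r s M : R) : (forall y, continuous h y) ->
  (forall x, Rmin r s <= x <= Rmax r s -> Rabs (h x) <= M) ->
  Rabs (RInt h 0 s - RInt h 0 r) <= M * Rabs (s - r).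
Proof.
  intros hc hb.
  assert (E : RInt h 0 s - RInt h 0 r = RInt h r s).
  { rewrite <- (RInt_Chasles h 0 r s) by (apply ex_RInt_cont; auto).
    unfold plus; simpl. ring. }
  rewrite E. destruct (Rle_dec r s) as [hrs|hrs].
  - rewrite (Rabs_pos_eq (s - r)) by lra. rewrite Rmult_comm. apply abs_RInt_le_const; auto.
    apply ex_RInt_cont; auto. intros t ht; apply hb.
    rewrite Rmin_left, Rmax_right; lra.
  - rewrite <- (opp_RInt_swap h s r) by (apply ex_RInt_cont; auto).
    unfold opp; simpl. rewrite Rabs_Ropp. rewrite (Rabs_left (s - r)) by lra.
    replace (- (s - r)) with (r - s) by ring. rewrite Rmult_comm.
    apply abs_RInt_le_const; [lra| apply ex_RInt_cont; auto|].
    intros t ht; apply hb. rewrite Rmin_right, Rmax_left; lra.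
Qed.

Lemma cont_of_eps (f : R -> R) x :
  (forall eps, 0 < eps -> exists delta, 0 < delta /\ forall y, Rabs (y - x) < delta -> Rabs (f y - f x) < eps) ->
  continuous f x.
Proof.
  intros H. apply continuity_pt_filterlim. intros eps he.
  destruct (H eps he) as [d [hd Hd]]. exists d. split; auto.
  intros y [_ hy]. apply Hd. exact hy.
Qed.

Lemma eps_of_cont (f : R -> R) x : continuous f x ->
  forall eps, 0 < eps -> exists delta, 0 < delta /\ forall y, Rabs (y - x) < delta -> Rabs (f y - f x) < eps.
Proof.
  intros H eps he. apply continuity_pt_filterlim in H.
  destruct (H eps he) as [d [hd Hd]]. exists d. split; auto.
  intros y hy. destruct (Req_dec y x). subst. rewrite Rminus_diag, Rabs_R0; auto.
  apply Hd. split. split; [exact I|auto]. exact hy.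
Qed.

Lemma cont_of_derive (f : R -> R) x l : is_derive f x l -> continuous f x.
Proof. intros H. apply (@ex_derive_continuous R_AbsRing R_NormedModule). exists l; auto. Qed.


Fixpoint pic (A w : R) (n : nat) : R -> R :=
  match n with
  | O => fun _ => 1
  | S m => fun t => 1 + RInt (fun s => Fw A w s + gcl (pic A w m s)) 0 t
  end.

Lemma pic_cont A w n x : continuous (pic A w n) x.
Proof.
  revert x; induction n; intros x; simpl.
  - apply cconst.
  - apply (cplus (fun _ => 1)). apply cconst.
    eapply cont_of_derive. apply prim_derive.
    intros y. apply (cplus (Fw A w)). apply Fw_cont. apply continuous_comp. auto. apply gcl_cont.
Qed.

Lemma h_cont A w (p : R -> R) : (forall x, continuous p x) ->
  forall y, continuous (fun s => Fw A w s + gcl (p s)) y.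
Proof.
  intros hp y. apply (cplus (Fw A w)). apply Fw_cont. apply continuous_comp. auto. apply gcl_cont.
Qed.

Lemma gdiff_cont (p q : R -> R) : (forall x, continuous p x) -> (forall x, continuous q x) ->
  forall y, continuous (fun s => gcl (p s) - gcl (q s)) y.
Proof.
  intros hp hq y. apply (cminus (fun s => gcl (p s))); apply continuous_comp; auto; apply gcl_cont.
Qed.

Lemma RInt_hdiff A w (p q : R -> R) t : (forall x, continuous p x) -> (forall x, continuous q x) ->
  RInt (fun s => Fw A w s + gcl (p s)) 0 t - RInt (fun s => Fw A w s + gcl (q s)) 0 t
  = RInt (fun s => gcl (p s) - gcl (q s)) 0 t.
Proof.
  intros hp hq.
  assert (E := RInt_minus (fun s => Fw A w s + gcl (p s)) (fun s => Fw A w s + gcl (q s)) 0 t).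
  unfold minus, plus, opp in E; simpl in E.
  match goal with |- ?a - ?b = _ => replace (a - b) with (a + - b) by ring end.
  rewrite <- E; try (apply ex_RInt_cont; apply h_cont; auto).
  apply RInt_ext. intros x _; lra.
Qed.

Lemma pic_step A w n t : Rabs (pic A w (S (S n)) t - pic A w (S n) t) <= (/2) ^ n * exp (2 * Rabs t) / 2.
Proof.
  revert t; induction n; intros t.
  - change (pic A w 2 t) with (1 + RInt (fun s => Fw A w s + gcl (pic A w 1 s)) 0 t).
    change (pic A w 1 t) with (1 + RInt (fun s => Fw A w s + gcl (pic A w 0 s)) 0 t).
    replace (1 + RInt (fun s => Fw A w s + gcl (pic A w 1 s)) 0 t -
      (1 + RInt (fun s => Fw A w s + gcl (pic A w 0 s)) 0 t)) with
      (RInt (fun s => Fw A w s + gcl (pic A w 1 s)) 0 t - RInt (fun s => Fw A w s + gcl (pic A w 0 s)) 0 t) by ring.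
    rewrite RInt_hdiff; [|apply pic_cont|apply pic_cont].
    apply int_bound. apply gdiff_cont; apply pic_cont.
    intros s. simpl pow. rewrite Rmult_1_l.
    pose proof (gcl_pos (pic A w 1 s)). pose proof (gcl_pos (pic A w 0 s)).
    assert (1 <= exp (2 * Rabs s)). { pose proof (exp_ineq1_le (2 * Rabs s)). pose proof (Rabs_pos s); lra. }
    apply Rabs_le; lra.
  - change (pic A w (S (S (S n))) t) with (1 + RInt (fun s => Fw A w s + gcl (pic A w (S (S n)) s)) 0 t).
    change (pic A w (S (S n)) t) with (1 + RInt (fun s => Fw A w s + gcl (pic A w (S n) s)) 0 t).
    replace (1 + RInt (fun s => Fw A w s + gcl (pic A w (S (S n)) s)) 0 t -
      (1 + RInt (fun s => Fw A w s + gcl (pic A w (S n) s)) 0 t)) with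
      (RInt (fun s => Fw A w s + gcl (pic A w (S (S n)) s)) 0 t - RInt (fun s => Fw A w s + gcl (pic A w (S n) s)) 0 t) by ring.
    rewrite RInt_hdiff; [|apply pic_cont|apply pic_cont].
    replace ((/ 2) ^ S n * exp (2 * Rabs t) / 2) with (((/ 2) ^ n / 2) * exp (2 * Rabs t) / 2) by (simpl; field).
    apply int_bound. apply gdiff_cont; apply pic_cont.
    intros s. eapply Rle_trans. apply gcl_lip. eapply Rle_trans. apply IHn. right; field.
Qed.

Lemma pic_cauchy A w n j t : Rabs (pic A w (S n + j) t - pic A w (S n) t) <= exp (2 * Rabs t) * ((/2) ^ n - (/2) ^ (n + j)).
Proof.
  induction j.
  - rewrite Nat.add_0_r, Nat.add_0_r. rewrite Rminus_diag, Rminus_diag, Rabs_R0, Rmult_0_r. lra.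
  - replace (S n + S j)%nat with (S (S (n + j))) by lia.
    replace (S n + j)%nat with (S (n + j)) in IHj by lia.
    pose proof (pic_step A w (n + j) t).
    replace (pic A w (S (S (n + j))) t - pic A w (S n) t) with
      ((pic A w (S (S (n + j))) t - pic A w (S (n + j)) t) + (pic A w (S (n + j)) t - pic A w (S n) t)) by ring.
    eapply Rle_trans. apply Rabs_triang.
    replace (n + S j)%nat with (S (n + j)) by lia. simpl pow at 2.
    lra.
Qed.


Lemma pic_cauchy2 A w N m t : (S N <= m)%nat -> Rabs (pic A w m t - pic A w (S N) t) <= exp (2 * Rabs t) * (/2) ^ N.
Proof.
  intros h. replace m with (S N + (m - S N))%nat by lia.
  eapply Rle_trans. apply pic_cauchy. pose proof (exp_pos (2 * Rabs t)).
  pose proof (half_pow_pos (N + (m - S N))). nra.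
Qed.

Definition Ufun A w t := real (Lim_seq (fun n => pic A w n t)).

Lemma pic_cvg A w t : is_lim_seq (fun n => pic A w n t) (Ufun A w t).
Proof.
  assert (ex_finite_lim_seq (fun n => pic A w n t)).
  { apply ex_lim_seq_cauchy_corr. intros eps.
    pose proof (exp_pos (2 * Rabs t)).
    destruct (half_pow_small (eps / (2 * exp (2 * Rabs t)))) as [N HN].
    { apply Rdiv_lt_0_compat. apply cond_pos. lra. }
    exists (S N). intros n m hn hm.
    pose proof (pic_cauchy2 A w N n t hn). pose proof (pic_cauchy2 A w N m t hm).
    specialize (HN N (le_n _)).
    assert (exp (2 * Rabs t) * (/2)^N < eps / 2).
    { apply Rmult_lt_reg_r with (/ exp (2 * Rabs t)). apply Rinv_0_lt_compat; lra.
      replace (exp (2 * Rabs t) * (/ 2) ^ N * / exp (2 * Rabs t)) with ((/2)^N) by (field; lra).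
      replace (eps / 2 * / exp (2 * Rabs t)) with (eps / (2 * exp (2 * Rabs t))) by (field; lra). auto. }
    replace (pic A w n t - pic A w m t) with ((pic A w n t - pic A w (S N) t) - (pic A w m t - pic A w (S N) t)) by ring.
    eapply Rle_lt_trans. apply Rabs_triang. rewrite Rabs_Ropp. lra. }
  unfold Ufun. apply ex_finite_lim_seq_correct in H. destruct H as [H1 H2].
  rewrite H2. apply Lim_seq_correct; auto.
Qed.

Lemma U_bound A w N t : Rabs (Ufun A w t - pic A w (S N) t) <= exp (2 * Rabs t) * (/2) ^ N.
Proof.
  pose proof (pic_cvg A w t) as H. apply is_lim_seq_Reals in H.
  destruct (Rle_dec (Rabs (Ufun A w t - pic A w (S N) t)) (exp (2 * Rabs t) * (/2) ^ N)) as [h|h]; auto.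
  exfalso. destruct (H (Rabs (Ufun A w t - pic A w (S N) t) - exp (2 * Rabs t) * (/2) ^ N)) as [N0 HN0]. lra.
  specialize (HN0 (max N0 (S N)) (Nat.le_max_l _ _)).
  pose proof (pic_cauchy2 A w N (max N0 (S N)) t (Nat.le_max_r _ _)).
  unfold R_dist in HN0.
  replace (Ufun A w t - pic A w (S N) t) with (-(pic A w (Init.Nat.max N0 (S N)) t - Ufun A w t) + (pic A w (Init.Nat.max N0 (S N)) t - pic A w (S N) t)) in h, HN0 by ring.
  pose proof (Rabs_triang (-(pic A w (Init.Nat.max N0 (S N)) t - Ufun A w t)) (pic A w (Init.Nat.max N0 (S N)) t - pic A w (S N) t)).
  rewrite Rabs_Ropp in H1. lra.
Qed.


Lemma abs3 a b c : Rabs (a + b - c) <= Rabs a + Rabs b + Rabs c.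
Proof. unfold Rabs; repeat destruct Rcase_abs; lra. Qed.

Lemma exp_le x y : x <= y -> exp x <= exp y.
Proof. intros [h|h]. left; apply exp_increasing; auto. subst; lra. Qed.

Lemma Fw_nonneg A w s : 0 <= Fw A w s.
Proof. apply sqrt_pos. Qed.

Lemma Fw_mono A w x R0 : Rabs x <= R0 -> Fw A w x <= Fw A w R0.
Proof.
  intros h. unfold Fw. apply sqrt_le_1_alt.
  assert (x ^ 2 <= R0 ^ 2).
  { pose proof (Rabs_pos x). replace (x^2) with (Rabs x ^ 2). nra.
    simpl. rewrite Rmult_1_r, Rmult_1_r. rewrite <- Rabs_mult. apply Rabs_pos_eq. nra. }
  assert (0 <= A ^ 2) by (apply pow2_ge_0). nra.
Qed.

Lemma pic_lip A w n r s R0 : Rabs r <= R0 -> Rabs s <= R0 ->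
  Rabs (pic A w (S n) s - pic A w (S n) r) <= (Fw A w R0 + 1) * Rabs (s - r).
Proof.
  intros hr hs. simpl.
  replace (1 + RInt (fun s0 => Fw A w s0 + gcl (pic A w n s0)) 0 s - (1 + RInt (fun s0 => Fw A w s0 + gcl (pic A w n s0)) 0 r))
    with (RInt (fun s0 => Fw A w s0 + gcl (pic A w n s0)) 0 s - RInt (fun s0 => Fw A w s0 + gcl (pic A w n s0)) 0 r) by ring.
  apply RInt_diff_bound. apply h_cont. apply pic_cont.
  intros x hx. assert (Rabs x <= R0).
  { apply Rabs_le. apply Rabs_le_between in hr. apply Rabs_le_between in hs.
    unfold Rmin, Rmax in hx; destruct (Rle_dec r s); lra. }
  pose proof (Fw_mono A w x R0 H). pose proof (Fw_nonneg A w x). pose proof (gcl_pos (pic A w n x)).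
  rewrite Rabs_pos_eq; lra.
Qed.

Lemma U_lip A w r s R0 : Rabs r <= R0 -> Rabs s <= R0 ->
  Rabs (Ufun A w s - Ufun A w r) <= (Fw A w R0 + 1) * Rabs (s - r).
Proof.
  intros hr hs. apply le_lim_trick with (C := 2 * exp (2 * R0)). intros n.
  pose proof (U_bound A w n s). pose proof (U_bound A w n r). pose proof (pic_lip A w n r s R0 hr hs).
  assert (exp (2 * Rabs s) <= exp (2 * R0)) by (apply exp_le; lra).
  assert (exp (2 * Rabs r) <= exp (2 * R0)) by (apply exp_le; lra).
  pose proof (half_pow_pos n).
  replace (Ufun A w s - Ufun A w r) with ((Ufun A w s - pic A w (S n) s) + (pic A w (S n) s - pic A w (S n) r) - (Ufun A w r - pic A w (S n) r)) by ring.
  eapply Rle_trans. apply abs3. nra.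
Qed.

Lemma U_cont A w x : continuous (Ufun A w) x.
Proof.
  apply cont_of_eps. intros eps he.
  set (L := Fw A w (Rabs x + 1) + 1).
  assert (hL : 0 < L) by (unfold L; pose proof (Fw_nonneg A w (Rabs x + 1)); lra).
  exists (Rmin 1 (eps / L)). split. apply Rmin_pos; [lra| apply Rdiv_lt_0_compat; lra].
  intros y hy. assert (h1 : Rabs (y - x) < 1) by (eapply Rlt_le_trans; [exact hy| apply Rmin_l]).
  assert (h2 : Rabs (y - x) < eps / L) by (eapply Rlt_le_trans; [exact hy| apply Rmin_r]).
  eapply Rle_lt_trans. apply (U_lip A w x y (Rabs x + 1)). lra.
  { revert h1. unfold Rabs; repeat destruct Rcase_abs; lra. }
  fold L. apply Rmult_lt_reg_r with (/ L). apply Rinv_0_lt_compat; lra.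
  replace (L * Rabs (y - x) * / L) with (Rabs (y - x)) by (field; lra). exact h2.
Qed.

Lemma U_eq A w t : Ufun A w t = 1 + RInt (fun s => Fw A w s + gcl (Ufun A w s)) 0 t.
Proof.
  assert (Rabs (Ufun A w t - (1 + RInt (fun s => Fw A w s + gcl (Ufun A w s)) 0 t)) <= 0).
  { apply le_lim_trick with (C := exp (2 * Rabs t)). intros n.
    pose proof (U_bound A w (S n) t) as B1.
    assert (B2 : Rabs (RInt (fun s => gcl (pic A w (S n) s) - gcl (Ufun A w s)) 0 t) <= (/2)^n * exp (2 * Rabs t) / 2).
    { apply int_bound. apply gdiff_cont. apply pic_cont. apply U_cont.
      intros s. eapply Rle_trans. apply gcl_lip. rewrite <- Rabs_Ropp, Ropp_minus_distr.
      rewrite Rmult_comm. apply U_bound. }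
    rewrite <- (RInt_hdiff A w) in B2; [|apply pic_cont|apply U_cont].
    replace (Ufun A w t - (1 + RInt (fun s => Fw A w s + gcl (Ufun A w s)) 0 t)) with
      ((Ufun A w t - pic A w (S (S n)) t) + (RInt (fun s => Fw A w s + gcl (pic A w (S n) s)) 0 t -
        RInt (fun s => Fw A w s + gcl (Ufun A w s)) 0 t)) by (simpl; ring).
    eapply Rle_trans. apply Rabs_triang. simpl pow in B1. lra. }
  pose proof (Rabs_pos (Ufun A w t - (1 + RInt (fun s => Fw A w s + gcl (Ufun A w s)) 0 t))).
  assert (Rabs (Ufun A w t - (1 + RInt (fun s => Fw A w s + gcl (Ufun A w s)) 0 t)) = 0) by lra.
  apply Rabs_eq_0 in H1. lra.
Qed.

Lemma U_derive A w t : is_derive (Ufun A w) t (Fw A w t + gcl (Ufun A w t)).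
Proof.
  apply is_derive_ext with (f := fun t => 1 + RInt (fun s => Fw A w s + gcl (Ufun A w s)) 0 t).
  intros; symmetry; apply U_eq.
  replace (Fw A w t + gcl (Ufun A w t)) with (0 + (Fw A w t + gcl (Ufun A w t))) by ring.
  apply (@is_derive_plus R_AbsRing R_NormedModule (fun _ => 1)). apply (@is_derive_const R_AbsRing R_NormedModule).
  apply (prim_derive (fun s => Fw A w s + gcl (Ufun A w s))). apply h_cont. apply U_cont.
Qed.

Lemma U_ge1 A w t : 0 <= t -> 1 <= Ufun A w t.
Proof.
  intros ht. rewrite U_eq. assert (0 <= RInt (fun s => Fw A w s + gcl (Ufun A w s)) 0 t); [|lra].
  apply RInt_ge_0; auto. apply ex_RInt_cont. apply h_cont. apply U_cont.
  intros x _. pose proof (Fw_nonneg A w x). pose proof (gcl_pos (Ufun A w x)). lra.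
Qed.


Lemma dmult (f g : R -> R) x df dg : is_derive f x df -> is_derive g x dg ->
  is_derive (fun y => f y * g y) x (df * g x + f x * dg).
Proof. intros. apply (@is_derive_mult R_AbsRing); auto. intros; apply Rmult_comm. Qed.

Lemma dminus (f g : R -> R) x df dg : is_derive f x df -> is_derive g x dg ->
  is_derive (fun y => f y - g y) x (df - dg).
Proof. intros. apply (@is_derive_minus R_AbsRing R_NormedModule); auto. Qed.

Lemma dexp (Q : R -> R) x q : is_derive Q x q -> is_derive (fun y => exp (Q y)) x (q * exp (Q x)).
Proof. intros. apply (@is_derive_comp R_AbsRing R_NormedModule exp Q). apply is_derive_exp. auto. Qed.

Lemma dlin c x : is_derive (fun y => c * y) x c.
Proof. auto_derive; auto. ring. Qed.

Lemma quot_bound a l h e : h <> 0 -> Rabs (a - l * h) <= e * Rabs h -> Rabs (a / h - l) <= e.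
Proof.
  intros hh hb. replace (a / h - l) with ((a - l * h) / h) by (field; auto).
  unfold Rdiv. rewrite Rabs_mult, Rabs_inv.
  apply Rmult_le_reg_r with (Rabs h). apply Rabs_pos_lt; auto.
  rewrite Rmult_assoc, Rinv_l. lra. apply Rabs_no_R0; auto.
Qed.

Lemma deriv_to_nonneg (f df : R -> R) : (forall t, 0 <= t -> is_derive f t (df t)) -> has_deriv_on_nonneg f df.
Proof.
  intros H t ht eps he. specialize (H t ht). apply is_derive_Reals in H.
  destruct (H eps he) as [d Hd]. exists d. split. apply cond_pos.
  intros s hs hst. destruct (Req_dec s t) as [e|e].
  - subst. replace (f t - f t - df t * (t - t)) with 0 by ring. rewrite Rabs_R0. pose proof (Rabs_pos (t-t)); nra.
  - specialize (Hd (s - t)). replace (t + (s - t)) with s in Hd by ring.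
    assert (s - t <> 0) by lra. specialize (Hd H0 hst).
    replace (f s - f t - df t * (s - t)) with (((f s - f t) / (s - t) - df t) * (s - t)) by (field; auto).
    rewrite Rabs_mult. apply Rmult_le_compat_r. apply Rabs_pos. lra.
Qed.

Lemma cont_to_nonneg (g : R -> R) : (forall t, 0 <= t -> continuous g t) -> cont_on_nonneg g.
Proof.
  intros H t ht eps he. destruct (eps_of_cont g t (H t ht) eps he) as [d [hd Hd]].
  exists d. split; auto.
Qed.

Definition ext (f df : R -> R) (t : R) : R := if Rle_dec 0 t then f t else f 0 + df 0 * t.

Lemma ext_eq f df t : 0 <= t -> ext f df t = f t.
Proof. intros. unfold ext. destruct (Rle_dec 0 t); [auto|lra]. Qed.

Lemma nonneg_to_deriv (f df : R -> R) : has_deriv_on_nonneg f df -> forall t, 0 <= t -> is_derive (ext f df) t (df t).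
Proof.
  intros H t ht. apply is_derive_Reals. intros eps he.
  destruct (H t ht (eps / 2)) as [d [hd Hd]]. lra.
  destruct (Rle_lt_or_eq_dec 0 t ht) as [tp|t0].
  - assert (hm : 0 < Rmin d t) by (apply Rmin_pos; lra).
    exists (mkposreal _ hm). intros h hh hhd. simpl in hhd.
    assert (Rabs h < d) by (eapply Rlt_le_trans; [exact hhd|apply Rmin_l]).
    assert (Rabs h < t) by (eapply Rlt_le_trans; [exact hhd|apply Rmin_r]).
    assert (0 <= t + h) by (revert H1; unfold Rabs; destruct Rcase_abs; lra).
    rewrite (ext_eq f df (t+h)), (ext_eq f df t) by lra.
    assert (B := Hd (t + h) H2). replace (t + h - t) with h in B by ring. specialize (B H0).
    eapply Rle_lt_trans. apply quot_bound; eauto. lra.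
  - subst t. exists (mkposreal _ hd). intros h hh hhd. simpl in hhd.
    destruct (Rle_dec 0 h) as [hp|hn].
    + rewrite (ext_eq f df (0+h)), (ext_eq f df 0) by lra.
      assert (B := Hd (0 + h) ltac:(lra)). replace (0 + h - 0) with h in B by ring. specialize (B hhd).
      eapply Rle_lt_trans. apply quot_bound; eauto. lra.
    + unfold ext. destruct (Rle_dec 0 (0 + h)); [lra|]. destruct (Rle_dec 0 0); [|lra].
      replace ((f 0 + df 0 * (0 + h) - f 0) / h - df 0) with 0 by (field; auto).
      rewrite Rabs_R0; lra.
Qed.

Lemma mvt0 (f df : R -> R) a b : 0 <= a < b -> (forall t, 0 <= t -> is_derive f t (df t)) ->
  exists c, a <= c <= b /\ f b - f a = df c * (b - a).
Proof.
  intros hab H. destruct (MVT_gen f a b df) as [c [hc E]].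
  - intros x hx. rewrite Rmin_left, Rmax_right in hx by lra. apply H; lra.
  - intros x hx. rewrite Rmin_left, Rmax_right in hx by lra. apply continuity_pt_filterlim.
    eapply cont_of_derive. apply H. lra.
  - exists c. rewrite Rmin_left, Rmax_right in hc by lra. auto.
Qed.

Lemma intfac (q : R -> R) : (forall t, 0 <= t -> continuous q t) ->
  exists Q, Q 0 = 0 /\ forall t, 0 <= t -> is_derive Q t (q t).
Proof.
  intros hq. exists (fun t => RInt (fun s => q (Rmax 0 s)) 0 t). split.
  - apply (@RInt_point R_CompleteNormedModule).
  - intros t ht. replace (q t) with (q (Rmax 0 t)) by (rewrite Rmax_right; auto).
    apply (prim_derive (fun s => q (Rmax 0 s))). intros y.
    apply continuous_comp. apply cont_Rmax. apply hq. apply Rmax_l.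
Qed.


Lemma minusR (a b : R) : minus a b = a - b.
Proof. reflexivity. Qed.

Ltac Req := match goal with |- ?a = ?b => change (@eq R a b) end.

Definition Vf A w t := / Ufun A w t.

Lemma dreplace (f : R -> R) x l l' : is_derive f x l -> l = l' -> is_derive f x l'.
Proof. intros; subst; auto. Qed.

Lemma U0 A w : Ufun A w 0 = 1.
Proof. rewrite U_eq. rewrite (@RInt_point R_CompleteNormedModule). unfold zero; simpl. ring. Qed.

Lemma gcl_U A w t : 0 <= t -> gcl (Ufun A w t) = / Ufun A w t.
Proof. intros. unfold gcl. rewrite Rmax_right; auto. apply U_ge1; auto. Qed.

Lemma V_derive A w t : 0 <= t -> is_derive (Vf A w) t (rhs A w t (Vf A w t)).
Proof.
  intros ht. pose proof (U_ge1 A w t ht).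
  eapply dreplace. apply is_derive_inv. apply U_derive. lra.
  unfold rhs, Vf. rewrite gcl_U by auto. unfold Fw. match goal with |- ?a = ?b => change (@eq R a b) end. field. lra.
Qed.

Lemma V_cont A w t : 0 <= t -> continuous (Vf A w) t.
Proof. intros. eapply cont_of_derive. apply V_derive; auto. Qed.

Lemma V_range A w t : 0 <= t -> 0 < Vf A w t <= 1.
Proof. intros. unfold Vf. apply inv_le1. apply U_ge1; auto. Qed.

Lemma U_mono A w s t : 0 <= s <= t -> Ufun A w s <= Ufun A w t.
Proof.
  intros h. destruct (Req_dec s t). subst; lra.
  destruct (mvt0 (Ufun A w) (fun x => Fw A w x + gcl (Ufun A w x)) s t) as [c [hc E]]. lra.
  intros; apply U_derive.
  pose proof (Fw_nonneg A w c). pose proof (gcl_pos (Ufun A w c)). nra.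
Qed.

Lemma Z_deriv A w1 w2 c : exists Q : R -> R, Q 0 = 0 /\ forall s, 0 <= s ->
  is_derive (fun s => (Ufun A w1 s - Ufun A w2 s - c * s) * exp (Q s)) s
    ((Fw A w1 s - Fw A w2 s - c - c * s * (/ Ufun A w1 s * / Ufun A w2 s)) * exp (Q s)).
Proof.
  destruct (intfac (fun s => gcl (Ufun A w1 s) * gcl (Ufun A w2 s))) as [Q [hQ0 hQ]].
  { intros t _. apply cmult; apply continuous_comp; try apply U_cont; apply gcl_cont. }
  exists Q. split; auto. intros s hs.
  pose proof (U_ge1 A w1 s hs). pose proof (U_ge1 A w2 s hs).
  eapply dreplace. apply dmult. apply dminus. apply dminus. apply U_derive. apply U_derive. apply dlin.
  apply dexp. apply hQ; auto.
  rewrite !gcl_U by auto. Req. field. lra.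
Qed.

Lemma U_compare A w1 w2 c : 0 <= c -> (forall s, 0 <= s -> Fw A w1 s - Fw A w2 s <= c) ->
  forall t, 0 <= t -> Ufun A w1 t - Ufun A w2 t <= c * t.
Proof.
  intros hc hF t ht. destruct (Req_dec t 0) as [e|ne].
  { subst. rewrite !U0. lra. }
  destruct (Z_deriv A w1 w2 c) as [Q [hQ0 hQ]].
  destruct (mvt0 _ _ 0 t ltac:(lra) hQ) as [x [hx E]].
  rewrite hQ0, exp_0, !U0 in E.
  pose proof (U_ge1 A w1 x ltac:(lra)). pose proof (U_ge1 A w2 x ltac:(lra)).
  assert (0 < / Ufun A w1 x * / Ufun A w2 x).
  { apply Rmult_lt_0_compat; apply Rinv_0_lt_compat; lra. }
  specialize (hF x ltac:(lra)).
  pose proof (exp_pos (Q x)). pose proof (exp_pos (Q t)).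
  assert (0 <= c * x * (/ Ufun A w1 x * / Ufun A w2 x)) by (apply Rmult_le_pos; [apply Rmult_le_pos|]; lra).
  assert ((Fw A w1 x - Fw A w2 x - c - c * x * (/ Ufun A w1 x * / Ufun A w2 x)) <= 0) by lra.
  set (d := Fw A w1 x - Fw A w2 x - c - c * x * (/ Ufun A w1 x * / Ufun A w2 x)) in *.
  assert (d * exp (Q x) <= 0) by nra.
  assert (d * exp (Q x) * (t - 0) <= 0) by nra.
  assert ((Ufun A w1 t - Ufun A w2 t - c * t) * exp (Q t) <= 0) by lra.
  set (X := Ufun A w1 t - Ufun A w2 t - c * t) in *.
  assert (X <= 0) by nra. unfold X in *. lra.
Qed.

Lemma U_strict A w1 w2 t : 0 <= w1 -> w1 < w2 -> 0 < t -> Ufun A w1 t < Ufun A w2 t.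
Proof.
  intros h1 h2 ht.
  destruct (Z_deriv A w2 w1 0) as [Q [hQ0 hQ]].
  destruct (mvt0 _ _ 0 t ltac:(lra) hQ) as [x [hx E]].
  rewrite hQ0, exp_0, !U0 in E.
  assert (Fw A w1 x < Fw A w2 x).
  { unfold Fw. apply sqrt_lt_1_alt. pose proof (pow2_ge_0 A). pose proof (pow2_ge_0 x). split; nra. }
  pose proof (exp_pos (Q x)). pose proof (exp_pos (Q t)).
  set (d := Fw A w2 x - Fw A w1 x - 0 - 0 * x * (/ Ufun A w2 x * / Ufun A w1 x)) in *.
  assert (0 < d) by (unfold d; lra).
  assert (0 < d * exp (Q x)) by nra.
  assert (0 < d * exp (Q x) * (t - 0)) by nra.
  assert (0 < (Ufun A w2 t - Ufun A w1 t - 0 * t) * exp (Q t)) by lra.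
  set (X := Ufun A w2 t - Ufun A w1 t - 0 * t) in *.
  assert (0 < X) by nra. unfold X in *. lra.
Qed.

Lemma lin_int k d t : RInt (fun s => s * k + d) 0 t = k * t ^ 2 / 2 + d * t.
Proof.
  apply is_RInt_unique.
  assert (E : is_RInt (fun s => s * k + d) 0 t (minus (k * t ^ 2 / 2 + d * t) (k * 0 ^ 2 / 2 + d * 0))).
  { apply (is_RInt_derive (fun s => k * s ^ 2 / 2 + d * s)).
    - intros x _. auto_derive; auto. change RinvImpl.Rinv with Rinv. field.
    - intros x _. apply (cplus (fun s => s * k)). apply cmult. apply cid. apply cconst. apply cconst. }
  rewrite minusR in E. assert (e : k * t ^ 2 / 2 + d * t - (k * 0 ^ 2 / 2 + d * 0) = k * t ^ 2 / 2 + d * t) by field.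
  rewrite e in E. exact E.
Qed.

Lemma U_lower A w t : 0 <= w -> 0 < t -> 1 + t * Fw A w t / 2 < Ufun A w t.
Proof.
  intros hw ht. rewrite (U_eq A w t).
  assert (RInt (fun s => s * (Fw A w t / t) + gcl (Ufun A w t)) 0 t <= RInt (fun s => Fw A w s + gcl (Ufun A w s)) 0 t).
  { apply RInt_le. lra. apply ex_RInt_cont. intros. apply (cplus (fun s => s * (Fw A w t / t))). apply cmult. apply cid. apply cconst. apply cconst.
    apply ex_RInt_cont. apply h_cont. apply U_cont.
    intros s hs. apply Rplus_le_compat.
    - set (k := s / t). assert (hk : s = k * t) by (unfold k; field; lra).
      assert (0 < k < 1). { unfold k. split. apply Rdiv_lt_0_compat; lra. apply Rmult_lt_reg_r with t. lra.
        unfold Rdiv. rewrite Rmult_assoc, Rinv_l; lra. }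
      replace (s * (Fw A w t / t)) with (k * Fw A w t) by (unfold k; field; lra).
      pose proof (Fw_nonneg A w t). pose proof (Fw_nonneg A w s).
      assert (e1 : Fw A w t * Fw A w t = A ^ 2 * t ^ 2 + w).
      { unfold Fw. apply sqrt_sqrt. pose proof (pow2_ge_0 A). pose proof (pow2_ge_0 t). nra. }
      assert (e2 : Fw A w s * Fw A w s = A ^ 2 * s ^ 2 + w).
      { unfold Fw. apply sqrt_sqrt. pose proof (pow2_ge_0 A). pose proof (pow2_ge_0 s). nra. }
      assert ((k * Fw A w t) * (k * Fw A w t) <= Fw A w s * Fw A w s).
      { rewrite e2. replace ((k * Fw A w t) * (k * Fw A w t)) with (k * k * (Fw A w t * Fw A w t)) by ring.
        rewrite e1. rewrite hk. assert (k * k * w <= w).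
        { assert (0 <= (1 - k * k) * w) by (apply Rmult_le_pos; nra). lra. }
        simpl. nra. }
      nra.
    - pose proof (U_mono A w s t ltac:(lra)). pose proof (U_ge1 A w s ltac:(lra)).
      rewrite !gcl_U by lra. apply Rinv_le_contravar; lra. }
  rewrite lin_int in H. pose proof (gcl_pos (Ufun A w t)).
  replace (Fw A w t / t * t ^ 2 / 2) with (t * Fw A w t / 2) in H by (field; lra).
  nra.
Qed.

Lemma V_upper A w t : 0 <= w -> 0 < t -> Vf A w t < 2 / (2 + t * sqrt (A ^ 2 * t ^ 2 + w)).
Proof.
  intros hw ht. pose proof (U_lower A w t hw ht). unfold Fw in H. unfold Vf.
  pose proof (sqrt_pos (A ^ 2 * t ^ 2 + w)).
  replace (2 / (2 + t * sqrt (A ^ 2 * t ^ 2 + w))) with (/ (1 + t * sqrt (A ^ 2 * t ^ 2 + w) / 2)) by (field; nra).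
  assert (0 <= t * sqrt (A ^ 2 * t ^ 2 + w)) by (apply Rmult_le_pos; lra).
  apply Rinv_lt_contravar; [|lra]. apply Rmult_lt_0_compat; lra.
Qed.


Lemma V_unique A w u : is_solution A w u -> forall t, 0 <= t -> u t = Vf A w t.
Proof.
  intros [hu0 [dv [hd [_ heq]]]] t ht.
  set (y := ext u dv).
  assert (hy : forall s, 0 <= s -> is_derive y s (rhs A w s (y s))).
  { intros s hs. eapply dreplace. apply nonneg_to_deriv; auto. unfold y; rewrite ext_eq; auto. }
  destruct (intfac (fun s => Fw A w s * (y s + Vf A w s) + y s * y s + y s * Vf A w s + Vf A w s * Vf A w s)) as [Q [hQ0 hQ]].
  { intros s hs. assert (cy : continuous y s) by (eapply cont_of_derive; apply hy; auto).
    assert (cv : continuous (Vf A w) s) by (apply V_cont; auto).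
    repeat (apply cplus || apply cmult); auto. apply Fw_cont. }
  assert (hZ : forall s, 0 <= s -> is_derive (fun s => (y s - Vf A w s) * exp (Q s)) s 0).
  { intros s hs. eapply dreplace. apply dmult. apply dminus. apply hy; auto. apply V_derive; auto.
    apply dexp. apply hQ; auto. unfold rhs, Fw. Req. ring. }
  rewrite <- (ext_eq u dv t ht). fold y.
  assert (y0 : y 0 = 1) by (unfold y; rewrite ext_eq by lra; auto).
  assert (V0 : Vf A w 0 = 1) by (unfold Vf; rewrite U0; apply Rinv_1).
  destruct (Req_dec t 0) as [e|ne]. { subst. lra. }
  destruct (mvt0 _ (fun _ => 0) 0 t ltac:(lra) hZ) as [c [hc E]].
  rewrite hQ0, exp_0, y0, V0 in E. pose proof (exp_pos (Q t)).
  assert ((y t - Vf A w t) * exp (Q t) = 0) by lra.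
  apply Rmult_integral in H0. destruct H0; lra.
Qed.

Lemma sqrt_diff a b : 0 <= a -> 0 <= b -> sqrt a - sqrt b <= sqrt (Rabs (a - b)).
Proof.
  intros ha hb. destruct (Rle_dec b a) as [h|h].
  - rewrite Rabs_pos_eq by lra.
    pose proof (sqrt_sqrt a ha). pose proof (sqrt_sqrt b hb). pose proof (sqrt_sqrt (a - b) ltac:(lra)).
    pose proof (sqrt_pos a). pose proof (sqrt_pos b). pose proof (sqrt_pos (a - b)). nra.
  - assert (sqrt a <= sqrt b) by (apply sqrt_le_1_alt; lra). pose proof (sqrt_pos (Rabs (a - b))). lra.
Qed.

Lemma V_lim A w : 0 < A -> 0 <= w -> is_lim (Vf A w) p_infty 0.
Proof.
  intros hA hw. apply is_lim_spec. intros eps. simpl.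
  pose proof (cond_pos eps) as he.
  exists (1 + 2 / (A * eps)). intros t ht.
  assert (0 < 2 / (A * eps)) by (apply Rdiv_lt_0_compat; nra).
  assert (t0 : 0 < t) by lra.
  pose proof (V_upper A w t hw t0). pose proof (V_range A w t ltac:(lra)).
  rewrite Rminus_0_r, Rabs_pos_eq by lra.
  assert (Ft : A * t <= sqrt (A ^ 2 * t ^ 2 + w)).
  { rewrite <- (sqrt_pow2 (A * t)) by nra. apply sqrt_le_1_alt. simpl. nra. }
  assert (A * t > 2 / eps).
  { assert (t > 2 / (A * eps)) by lra. apply Rmult_gt_compat_l with (r := A) in H2; auto.
    replace (A * (2 / (A * eps))) with (2 / eps) in H2 by (field; lra). auto. }
  assert (0 <= (t - 1) * sqrt (A ^ 2 * t ^ 2 + w)) by (apply Rmult_le_pos; [lra| apply sqrt_pos]).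
  assert (t * sqrt (A ^ 2 * t ^ 2 + w) >= A * t) by nra.
  assert (2 < eps * (2 + t * sqrt (A ^ 2 * t ^ 2 + w))).
  { assert (eps * (A * t) > 2).
    { apply Rmult_gt_compat_l with (r := eps) in H2; auto. replace (eps * (2 / eps)) with 2 in H2 by (field; lra). lra. }
    nra. }
  eapply Rlt_trans. apply H0.
  apply Rmult_lt_reg_r with (2 + t * sqrt (A ^ 2 * t ^ 2 + w)). nra.
  unfold Rdiv. rewrite Rmult_assoc, Rinv_l by nra. lra.
Qed.


Lemma V_cont_w A : 0 < A -> forall w0, 0 <= w0 -> forall eps, 0 < eps -> exists delta, 0 < delta /\
       forall w, 0 <= w -> Rabs (w - w0) < delta ->
         forall t, 0 < t -> Rabs (Vf A w t - Vf A w0 t) <= eps.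
Proof.
  intros hA w0 hw0 eps he.
  set (K := 1 + 2 / A). assert (hK : 1 < K) by (unfold K; assert (0 < 2 / A) by (apply Rdiv_lt_0_compat; lra); lra).
  exists ((eps / K) ^ 2). split. { apply pow_lt. apply Rdiv_lt_0_compat; lra. }
  intros w hw hd t ht.
  set (c := sqrt (Rabs (w - w0))).
  assert (hc0 : 0 <= c) by apply sqrt_pos.
  assert (hc : c <= eps / K).
  { unfold c. rewrite <- (sqrt_pow2 (eps / K)). apply sqrt_le_1_alt. lra.
    left; apply Rdiv_lt_0_compat; lra. }
  assert (F1 : forall s, 0 <= s -> Fw A w s - Fw A w0 s <= c).
  { intros s _. unfold Fw, c. replace (w - w0) with ((A ^ 2 * s ^ 2 + w) - (A ^ 2 * s ^ 2 + w0)) by ring.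
    pose proof (pow2_ge_0 A); pose proof (pow2_ge_0 s). apply sqrt_diff; nra. }
  assert (F2 : forall s, 0 <= s -> Fw A w0 s - Fw A w s <= c).
  { intros s _. unfold Fw, c. rewrite <- Rabs_Ropp. replace (- (w - w0)) with ((A ^ 2 * s ^ 2 + w0) - (A ^ 2 * s ^ 2 + w)) by ring.
    pose proof (pow2_ge_0 A); pose proof (pow2_ge_0 s). apply sqrt_diff; nra. }
  pose proof (U_compare A w w0 c hc0 F1 t ltac:(lra)) as D1.
  pose proof (U_compare A w0 w c hc0 F2 t ltac:(lra)) as D2.
  pose proof (U_ge1 A w t ltac:(lra)) as hU. pose proof (U_ge1 A w0 t ltac:(lra)) as hU0.
  pose proof (U_lower A w0 t hw0 ht) as L0.
  assert (Ft : A * t <= Fw A w0 t).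
  { unfold Fw. rewrite <- (sqrt_pow2 (A * t)) by nra. apply sqrt_le_1_alt. simpl. nra. }
  assert (tK : t <= K * Ufun A w0 t).
  { assert (t * (A * t) <= t * Fw A w0 t) by (apply Rmult_le_compat_l; lra).
    assert (1 + t * (A * t) / 2 < Ufun A w0 t) by lra.
    assert (1 + A * t * t / 2 <= Ufun A w0 t) by (replace (A * t * t) with (t * (A * t)) by ring; lra).
    assert (K * (1 + A * t * t / 2) = 1 + A * t * t / 2 + 2 / A + t * t) by (unfold K; field; lra).
    assert (0 < 2 / A) by (apply Rdiv_lt_0_compat; lra).
    assert (0 <= (t - 1) * (t - 1)) by (apply Rle_0_sqr).
    assert (0 <= A * t * t) by (apply Rmult_le_pos; [apply Rmult_le_pos|]; lra).
    assert (t <= K * (1 + A * t * t / 2)) by lra.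
    assert (K * (1 + A * t * t / 2) <= K * Ufun A w0 t) by (apply Rmult_le_compat_l; lra).
    lra. }
  unfold Vf.
  replace (/ Ufun A w t - / Ufun A w0 t) with ((Ufun A w0 t - Ufun A w t) * / Ufun A w t * / Ufun A w0 t) by (field; lra).
  rewrite !Rabs_mult. rewrite (Rabs_pos_eq (/ Ufun A w t)), (Rabs_pos_eq (/ Ufun A w0 t)) by (left; apply Rinv_0_lt_compat; lra).
  assert (Rabs (Ufun A w0 t - Ufun A w t) <= c * t) by (apply Rabs_le; lra).
  pose proof (inv_le1 _ hU). pose proof (inv_le1 _ hU0).
  assert (Rabs (Ufun A w0 t - Ufun A w t) * / Ufun A w t * / Ufun A w0 t <= c * t * / Ufun A w0 t).
  { apply Rmult_le_compat_r. lra. pose proof (Rabs_pos (Ufun A w0 t - Ufun A w t)). nra. }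
  assert (c * t * / Ufun A w0 t <= c * K).
  { apply Rmult_le_reg_r with (Ufun A w0 t). lra. rewrite Rmult_assoc, Rinv_l by lra. nra. }
  assert (c * K <= eps).
  { apply Rmult_le_reg_r with (/ K). apply Rinv_0_lt_compat; lra. rewrite Rmult_assoc, Rinv_r by lra. lra. }
  lra.
Qed.


Theorem lemma4p1 (A : R) (hA : 0 < A) :
  exists V : R -> R -> R,
    (* existence, uniqueness on [0,+oo), values in (0,1] *)
    (forall w, 0 <= w ->
       is_solution A w (V w) /\
       (forall u, is_solution A w u -> forall t, 0 <= t -> u t = V w t) /\
       (forall t, 0 <= t -> 0 < V w t <= 1)) /\
    (* (1) strict monotonicity in t and in w *)
    (forall w, 0 <= w -> forall s t, 0 <= s -> s < t -> V w t < V w s) /\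
    (forall t, 0 < t -> forall w1 w2, 0 <= w1 -> w1 < w2 -> V w2 t < V w1 t) /\
    (* (2) upper bound and decay *)
    (forall t w, 0 < t -> 0 <= w ->
       V w t < 2 / (2 + t * sqrt (A ^ 2 * t ^ 2 + w))) /\
    (forall w, 0 <= w -> is_lim (V w) p_infty 0) /\
    (* (3) continuity of w |-> V w into L^oo(0,+oo) (sup norm over (0,+oo),
       which equals the ess-sup norm since the V w are continuous) *)
    (forall w0, 0 <= w0 -> forall eps, 0 < eps -> exists delta, 0 < delta /\
       forall w, 0 <= w -> Rabs (w - w0) < delta ->
         forall t, 0 < t -> Rabs (V w t - V w0 t) <= eps).
Proof.
  exists (Vf A). split; [|split; [|split; [|split; [|split]]]].
  - intros w hw. split; [|split].
    + split. unfold Vf; rewrite U0; apply Rinv_1.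
      exists (fun t => rhs A w t (Vf A w t)). split; [|split].
      * apply deriv_to_nonneg. intros; apply V_derive; auto.
      * apply cont_to_nonneg. intros t ht. unfold rhs.
        assert (cv : continuous (Vf A w) t) by (apply V_cont; auto).
        change (continuous (fun t => - (Vf A w t) ^ 2 * (Fw A w t + Vf A w t)) t).
        apply cmult. simpl. apply copp. repeat apply cmult; auto; apply cconst.
        apply cplus; auto. apply Fw_cont.
      * auto.
    + intros u hu. apply V_unique; auto.
    + intros. apply V_range; auto.
  - intros w hw s t hs hst.
    destruct (mvt0 (Vf A w) (fun x => rhs A w x (Vf A w x)) s t ltac:(lra)) as [c [hc E]].
    intros; apply V_derive; auto.
    pose proof (V_range A w c ltac:(lra)). pose proof (Fw_nonneg A w c).
    unfold rhs in E. fold (Fw A w c) in E.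
    assert (0 < Vf A w c ^ 2 * (Fw A w c + Vf A w c)) by (apply Rmult_lt_0_compat; [apply pow_lt|]; lra).
    nra.
  - intros t ht w1 w2 h1 h2. unfold Vf. pose proof (U_strict A w1 w2 t h1 h2 ht).
    pose proof (U_ge1 A w1 t ltac:(lra)). apply Rinv_lt_contravar; nra.
  - intros t w ht hw. apply V_upper; auto.
  - intros w hw. apply V_lim; auto.
  - apply V_cont_w; auto.
Qed.
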